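(* Let $n$ be a positive even integer, $0\le a<b$ and $d>0$. If a set $A\subseteq\mathbb{R}^2$ is totally $n$-dissected at the interval $(a,b)$ with thickness $d$, and $a<\cot(\pi/n)$, then $A$ is not drawable.
   Context: For $X\subseteq\mathbb{R}^2$ let $N(X)=\{x: |x-y|<1 \text{ for some } y\in X\}$. Let $\mathcal{D}_1=\{N(A_1): A_1\subseteq\mathbb{R}^2\}$ and for $m\ge 2$ let $\mathcal{D}_m=\{D\cup N(A_m): D\in\mathcal{D}_{m-1}, A_m\subseteq\mathbb{R}^2\}$ if $m$ is odd and $\mathcal{D}_m=\{D\setminus N(A_m): D\in\mathcal{D}_{m-1}, A_m\subseteq\mathbb{R}^2\}$ if $m$ is even; a set is drawable if it lies in $\bigcup_m\mathcal{D}_m$. Let $\ell$ be a ray emanating from $P$, and let $P_1,P_2\in\ell$ be the points at distance $a$ and $b$ from $P$. Consider the two rectangles, one on each side of the line through $\ell$, having $P_1P_2$ as a side and other side length $d$. $A$ is dissected by $\ell$ at $(a,b)$ with thickness $d$ if the interior of one of these rectangles is contained in $A$ and the interior of the other is disjoint from $A$; the dissection is clockwise if the rectangle contained in $A$ lies on the clockwise side of $\ell$ (the side swept by rotating $\ell$ clockwise about $P$), and counterclockwise otherwise. $A$ is totally $n$-dissected at $(a,b)$ with thickness $d$ if there are rays $\ell_1,\dots,\ell_n$ emanating from a common point, in this cyclic order, dividing the plane into $n$ equal angles, such that $A$ is dissected by each $\ell_i$ at $(a,b)$ with thickness $d$ and cyclically adjacent rays have opposite orientations. *)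

(* Defs.v *)
From Stdlib Require Import Reals Lra Lia.
Open Scope R_scope.

Definition point := (R * R)%type.
Definition pset := point -> Prop.

Definition dist (x y : point) : R :=
  sqrt ((fst x - fst y) ^ 2 + (snd x - snd y) ^ 2).

Definition N (X : pset) : pset := fun x => exists y, X y /\ dist x y < 1.

(* D m S : S belongs to the family D_m (m >= 1); set membership in the
   family is up to extensional equality of sets. *)
Fixpoint D (m : nat) (X : pset) : Prop :=
  match m with
  | O => False
  | S m' =>
      match m' with
      | O => exists A1 : pset, forall x, X x <-> N A1 x
      | S _ => if Nat.odd m then
               exists (D0 : pset) (Am : pset), D m' D0 /\
                 forall x, X x <-> (D0 x \/ N Am x)
             else
               exists (D0 : pset) (Am : pset), D m' D0 /\
                 forall x, X x <-> (D0 x /\ ~ N Am x)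
      end
  end.

Definition drawable (A : pset) : Prop := exists m : nat, D m A.

(* The ray l from P with direction angle th, i.e. unit direction
   u = (cos th, sin th).  The clockwise side of l (the side swept by
   rotating l clockwise about P) is the side of the unit normal
   v = (sin th, - cos th).  The open rectangle with side P1P2
   (P1 = P + a u, P2 = P + b u) on that side with other side d is
   { P + s u + t v | a < s < b, 0 < t < d }; the one on the
   counterclockwise side has -d < t < 0. *)
Definition strip (P : point) (th a b t1 t2 : R) : pset :=
  fun x => exists s t, a < s < b /\ t1 < t < t2 /\
    x = (fst P + s * cos th + t * sin th, snd P + s * sin th - t * cos th).

Definition rect_cw (P : point) (th a b d : R) : pset := strip P th a b 0 d.
Definition rect_ccw (P : point) (th a b d : R) : pset := strip P th a b (- d) 0.

Definition dissected (A : pset) (P : point) (th a b d : R) (cw : bool) : Prop :=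
  if cw then
    (forall x, rect_cw P th a b d x -> A x) /\
    (forall x, rect_ccw P th a b d x -> ~ A x)
  else
    (forall x, rect_ccw P th a b d x -> A x) /\
    (forall x, rect_cw P th a b d x -> ~ A x).

Definition totally_dissected (A : pset) (n : nat) (a b d : R) : Prop :=
  exists (P : point) (th0 : R) (o : nat -> bool),
    (forall i : nat, (i < n)%nat ->
       dissected A P (th0 + 2 * PI * INR i / INR n) a b d (o i)) /\
    (forall i : nat, (i < n)%nat -> o i <> o ((i + 1) mod n)%nat).

(* Main.v *)
Require Import Defs.
From Stdlib Require Import Reals Lra Lia Psatz Classical.
Open Scope R_scope.


Definition coreP (sn cs a b d a' b' d' : R) : Prop :=
  forall p q u v, a' < u < b' -> 0 < v < d' -> (u - p)^2 + (v - q)^2 < 1 ->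
  (exists s t, a < s < b /\ 0 < t < d /\ (s - p)^2 + (- t - q)^2 < 1) \/
  (exists s t, a < s < b /\ 0 < t < d /\
     (s * (1 - 2 * sn^2) - t * (2 * sn * cs) - p)^2 +
     (s * (2 * sn * cs) + t * (1 - 2 * sn^2) - q)^2 < 1).

Lemma min_pos (x y : R) : 0 < x -> 0 < y -> exists z, 0 < z /\ z <= x /\ z <= y.
Proof. intros. exists (Rmin x y). split; [apply Rmin_pos; auto|split; [apply Rmin_l|apply Rmin_r]]. Qed.

Lemma bnd x y B : 0 <= x <= B -> -1 <= y <= 1 -> - B <= x * y <= B.
Proof. intros. split; nra. Qed.

Lemma core sn cs a b d : 0 < sn -> sn^2 + cs^2 = 1 -> 0 <= a -> a < b -> 0 < d -> a * sn < cs ->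
  exists a' b' d', a <= a' /\ a' < b' /\ b' <= b /\ a' * sn < cs /\ 0 < d' /\ d' <= d /\
    coreP sn cs a b d a' b' d'.
Proof.
  intros HS HSC Ha Hab Hd HaS.
  set (m := Rmin b ((a + cs / sn) / 2)).
  Time assert (Hmb : m <= b) by apply Rmin_l.
  Time assert (Hm2 : m <= (a + cs / sn) / 2) by apply Rmin_r.
  Time assert (HCS : a < cs / sn).
  { apply (Rmult_lt_reg_r sn); auto. unfold Rdiv. rewrite Rmult_assoc, Rinv_l by lra. lra. }
  Time assert (Ham : a < m).
  { unfold m. apply Rmin_glb_lt; lra. }
  Time assert (HmS : m * sn < cs).
  { assert (m * sn <= (a + cs/sn)/2 * sn) by (apply Rmult_le_compat_r; lra).
    assert ((a + cs/sn)/2 * sn = (a*sn + cs)/2) by (field; lra). lra. }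
  set (dl := (m - a) / 3).
  Time assert (Hdl : 0 < dl) by (unfold dl; lra).
  set (a' := a + dl). set (b' := a + 2 * dl).
  Time assert (Hb'sn : b' * sn < cs).
  { assert (b' * sn <= m * sn) by (apply Rmult_le_compat_r; unfold b', dl; lra). lra. }
  Time assert (Ha'0 : 0 < a') by (unfold a'; lra).
  set (mu := 4 * a' * sn * (cs - b' * sn)).
  Time assert (Hmu : 0 < mu).
  { unfold mu. apply Rmult_lt_0_compat; [|lra]. apply Rmult_lt_0_compat; lra. }
  destruct (min_pos 1 (mu / (16 * (b + 1)))) as [K [HK0 [HK1 HK2]]]; try lra.
  { apply Rdiv_lt_0_compat; lra. }
  destruct (min_pos d (1/4)) as [e1 [He1 [He1a He1b]]]; try lra.
  destruct (min_pos (3 * dl^2 / 40) (K^2/4)) as [e2 [He2 [He2a He2b]]]; try nra.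
  destruct (min_pos e2 (mu / (8 * (2 * b + 3)))) as [e3 [He3 [He3a He3b]]]; try lra.
  { apply Rdiv_lt_0_compat; lra. }
  destruct (min_pos e1 e3) as [d' [Hd' [Hd'a Hd'b]]]; try lra.
  exists a', b', d'.
  split; [unfold a'; lra|]. split; [unfold a', b'; lra|].
  split; [unfold b', dl; lra|]. split.
  { assert (a' * sn <= b' * sn) by (apply Rmult_le_compat_r; unfold a', b'; lra). lra. }
  split; [lra|]. split; [lra|].
  intros p q u v Hu Hv Hdist.
  destruct (classic (exists s t, a < s < b /\ 0 < t < d /\ (s - p)^2 + (- t - q)^2 < 1)) as [H1|H1];
    [left; exact H1| right].
  Time assert (H1' : forall s t, a < s < b -> 0 < t < d -> 1 <= (s - p)^2 + (- t - q)^2).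
  { intros s t Hs Ht. apply Rnot_lt_le. intro Hc. apply H1. exists s, t. auto. }
  Time assert (Hv1 : v < 1/4) by lra.
  Time assert (Hv2 : v < 3 * dl^2 / 40) by lra.
  Time assert (Hv3 : v < K^2/4) by lra.
  Time assert (Hv4 : v < mu / (8 * (2 * b + 3))) by lra.
  Time assert (Hvd : v < d) by lra.
  Time assert (Hq0 : (v - q)^2 < 1) by (pose proof (pow2_ge_0 (u - p)); lra).
  Time assert (Hq1 : v - 1 < q < 1 + v) by (split; nra).
  Time assert (Hpa : a < p).
  { apply Rnot_le_lt. intro Hp.
    Time assert (Hs := H1' (u - dl/2) v). 
    assert (1 <= (u - dl / 2 - p) ^ 2 + (- v - q) ^ 2) by (apply Hs; unfold a', b', dl in *; lra).
    assert (u - p > dl) by (unfold a' in *; lra).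
    nra. }
  Time assert (Hpb : p < b).
  { apply Rnot_le_lt. intro Hp.
    Time assert (Hs := H1' (u + dl/2) v). 
    assert (1 <= (u + dl / 2 - p) ^ 2 + (- v - q) ^ 2) by (apply Hs; unfold a', b', dl in *; lra).
    assert (u - p < - dl) by (unfold b', dl in *; lra).
    nra. }
  Time assert (Hq : 1 - v <= q).
  { assert (1 <= (p - p) ^ 2 + (- v - q) ^ 2) by (apply H1'; lra). nra. }
  Time assert (HD : (u - p)^2 < 4 * v).
  { assert ((1 - 2 * v)^2 <= (v - q)^2) by nra. nra. }
  Time assert (HDK : - K < u - p < K) by nra.
  destruct (min_pos (d/2) (Rmin 1 (mu / (8 * (2 * b + 5))))) as [t [Ht [Hta Htb]]]; try lra.
  { apply Rmin_pos; [lra|]. apply Rdiv_lt_0_compat; lra. }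
  Time assert (Ht1 : t <= 1) by (pose proof (Rmin_l 1 (mu / (8 * (2 * b + 5)))); lra).
  Time assert (Ht2 : t <= mu / (8 * (2 * b + 5))) by (pose proof (Rmin_r 1 (mu / (8 * (2 * b + 5)))); lra).
  exists u, t. split; [unfold a', b', dl in *; lra|]. split; [lra|].
  Time assert (Hid : (u * (1 - 2 * sn^2) - t * (2 * sn * cs) - p)^2 +
     (u * (2 * sn * cs) + t * (1 - 2 * sn^2) - q)^2 =
     1 - 4 * u * sn * (cs - u * sn) +
     (- 4 * u * sn^2 * (u - p) + (u - p)^2 + (q - 1) * (2 + (q - 1) - 4 * u * sn * cs)) +
     (t^2 + 2 * t * (p * (2 * sn * cs) - q * (1 - 2 * sn^2)))).
  { assert (Hz : sn^2 + cs^2 - 1 = 0) by lra.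
    transitivity (1 - 4 * u * sn * (cs - u * sn) +
     (- 4 * u * sn^2 * (u - p) + (u - p)^2 + (q - 1) * (2 + (q - 1) - 4 * u * sn * cs)) +
     (t^2 + 2 * t * (p * (2 * sn * cs) - q * (1 - 2 * sn^2))) + (u^2 + t^2) * 4 * sn^2 * (sn^2 + cs^2 - 1)).
    - ring.
    - rewrite Hz. ring. }
  rewrite Hid.
  Time assert (Hbase : mu <= 4 * u * sn * (cs - u * sn)).
  { unfold mu.
    Time assert (HuS : cs - b' * sn <= cs - u * sn) by nra.
    assert (a' * sn <= u * sn) by nra.
    assert (0 < cs - b' * sn) by lra.
    assert (a' * sn * (cs - b' * sn) <= u * sn * (cs - u * sn)).
    { apply Rmult_le_compat; try lra. apply Rmult_le_pos; lra. }
    lra. }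
  Time assert (HS1 : sn^2 <= 1) by (pose proof (pow2_ge_0 cs); lra).
  Time assert (HSC2 : 2 * sn * cs <= 1 /\ - 1 <= 2 * sn * cs).
  { pose proof (pow2_ge_0 (sn - cs)). pose proof (pow2_ge_0 (sn + cs)). split; nra. }
  Time assert (HC2 : - 1 <= 1 - 2 * sn^2 <= 1) by (pose proof (pow2_ge_0 sn); lra).
  Time assert (Hub : 0 < u < b) by (unfold a', b', dl in *; lra).
  Time assert (HP1 : - 4 * u * sn^2 * (u - p) + (u - p)^2 <= mu / 4).
  { assert (4 * (b+1) * K <= mu / 4).
    { assert (K * (16 * (b+1)) <= mu) .
      { apply (Rmult_le_reg_r (/ (16 * (b+1)))). apply Rinv_0_lt_compat; lra.
        rewrite Rmult_assoc, Rinv_r by lra. unfold Rdiv in HK2. lra. }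
      lra. }
    assert (- 4 * u * sn^2 * (u - p) <= 4 * b * K).
    { assert (Rabs (4 * u * sn^2 * (u - p)) <= 4 * b * K).
      { rewrite !Rabs_mult. rewrite (Rabs_right 4) by lra. rewrite (Rabs_right u) by lra.
        rewrite (Rabs_right (sn^2)) by (apply Rle_ge, pow2_ge_0).
        assert (Rabs (u - p) <= K) by (apply Rabs_le; lra).
        assert (0 <= Rabs (u - p)) by apply Rabs_pos.
        assert (u * sn^2 <= b * 1) by (apply Rmult_le_compat; try lra; apply pow2_ge_0).
        assert (u * sn^2 * Rabs (u - p) <= b * 1 * K).
        { apply Rmult_le_compat; try lra. apply Rmult_le_pos; [lra|apply pow2_ge_0]. }
        lra. }
      assert (- (4 * u * sn^2 * (u - p)) <= Rabs (4 * u * sn^2 * (u - p))) by (rewrite <- Rabs_Ropp; apply RRle_abs).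
      lra. }
    assert (K * K <= K * 1) by (apply Rmult_le_compat_l; lra).
    assert ((u - p)^2 <= K) by (simpl in *; lra).
    lra. }
  Time assert (HP2 : (q - 1) * (2 + (q - 1) - 4 * u * sn * cs) <= mu / 8).
  { assert (- v <= q - 1 < v) by lra.
    assert (- b <= u * (2 * sn * cs) <= b) by (apply bnd; lra).
    assert (Rabs (2 + (q - 1) - 4 * u * sn * cs) <= 3 + 2 * b).
    { apply Rabs_le. lra. }
    assert (Rabs (q - 1) <= v) by (apply Rabs_le; lra).
    assert (Rabs ((q - 1) * (2 + (q - 1) - 4 * u * sn * cs)) <= v * (3 + 2 * b)).
    { rewrite Rabs_mult. apply Rmult_le_compat; try apply Rabs_pos; lra. }
    assert (v * (3 + 2 * b) <= mu / 8).
    { assert (v * (8 * (2 * b + 3)) <= mu).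
      { apply (Rmult_le_reg_r (/ (8 * (2 * b + 3)))). apply Rinv_0_lt_compat; lra.
        rewrite Rmult_assoc, Rinv_r by lra. unfold Rdiv in Hv4. lra. }
      lra. }
    pose proof (RRle_abs ((q - 1) * (2 + (q - 1) - 4 * u * sn * cs))). lra. }
  Time assert (HP3 : t^2 + 2 * t * (p * (2 * sn * cs) - q * (1 - 2 * sn^2)) <= mu / 8).
  { assert (- b <= p * (2 * sn * cs) <= b) by (apply bnd; lra).
    assert (- 2 <= q * (1 - 2 * sn^2) <= 2).
    { destruct (Rle_lt_dec 0 q).
      - assert (- 2 <= q * (1 - 2 * sn^2) <= 2) by (apply bnd; lra). lra.
      - assert (- 2 <= (- q) * (1 - 2 * sn^2) <= 2) by (apply bnd; lra). lra. }
    assert (t * (8 * (2 * b + 5)) <= mu).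
    { apply (Rmult_le_reg_r (/ (8 * (2 * b + 5)))). apply Rinv_0_lt_compat; lra.
      rewrite Rmult_assoc, Rinv_r by lra. unfold Rdiv in Ht2. lra. }
    assert (t * (p * (2 * sn * cs) - q * (1 - 2 * sn^2)) <= t * (b + 2)) by (apply Rmult_le_compat_l; lra).
    assert (t * t <= t * 1) by (apply Rmult_le_compat_l; lra).
    simpl. lra. }
  lra.
Qed.
Lemma dist_lt1 (x y : point) : Defs.dist x y < 1 <-> (fst x - fst y)^2 + (snd x - snd y)^2 < 1.
Proof.
  unfold Defs.dist. split; intro H.
  - apply Rnot_le_lt. intro Hc. apply sqrt_le_1_alt in Hc. rewrite sqrt_1 in Hc. lra.
  - rewrite <- sqrt_1. apply sqrt_lt_1_alt. split; [|exact H].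
    pose proof (pow2_ge_0 (fst x - fst y)). pose proof (pow2_ge_0 (snd x - snd y)). lra.
Qed.

Lemma frame (al be ka P1 P2 y1 y2 : R) : al^2 + be^2 = 1 -> (ka = 1 \/ ka = -1) ->
  exists p q, forall s t, (P1 + s * al + t * ka * be - y1)^2 + (P2 + s * be - t * ka * al - y2)^2
     = (s - p)^2 + (t - q)^2.
Proof.
  intros H1 Hk.
  exists ((y1 - P1) * al + (y2 - P2) * be), (ka * ((y1 - P1) * be - (y2 - P2) * al)).
  intros s t.
  assert (Hz : al^2 + be^2 - 1 = 0) by lra.
  destruct Hk as [-> | ->].
  - transitivity ((s - ((y1 - P1) * al + (y2 - P2) * be))^2 + (t - (1 * ((y1 - P1) * be - (y2 - P2) * al)))^2
       + (al^2 + be^2 - 1) * (s^2 + t^2 - (y1 - P1)^2 - (y2 - P2)^2)); [ring|rewrite Hz; ring].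
  - transitivity ((s - ((y1 - P1) * al + (y2 - P2) * be))^2 + (t - (-1 * ((y1 - P1) * be - (y2 - P2) * al)))^2
       + (al^2 + be^2 - 1) * (s^2 + t^2 - (y1 - P1)^2 - (y2 - P2)^2)); [ring|rewrite Hz; ring].
Qed.

Lemma local_cw P ph ps a b d a' b' d' sn cs (Y : pset) :
  coreP sn cs a b d a' b' d' ->
  cos ps = cos ph * (1 - 2 * sn^2) + sin ph * (2 * sn * cs) ->
  sin ps = sin ph * (1 - 2 * sn^2) - cos ph * (2 * sn * cs) ->
  (forall x, rect_ccw P ph a b d x -> ~ Defs.N Y x) ->
  (forall x, rect_cw P ps a b d x -> ~ Defs.N Y x) ->
  forall x, rect_cw P ph a' b' d' x -> ~ Defs.N Y x.
Proof.
  intros Hc Hcos Hsin H1 H2 x [u [v [Hu [Hv ->]]]] [y [HY Hd]].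
  apply dist_lt1 in Hd. simpl in Hd.
  destruct (frame (cos ph) (sin ph) 1 (fst P) (snd P) (fst y) (snd y)) as [p [q Hf]].
  { replace (cos ph ^ 2 + sin ph ^ 2) with (Rsqr (sin ph) + Rsqr (cos ph)) by (unfold Rsqr; ring); apply sin2_cos2. }
  { left; reflexivity. }
  assert (Hd' : (u - p)^2 + (v - q)^2 < 1).
  { rewrite <- Hf. replace (fst P + u * cos ph + v * 1 * sin ph - fst y) with
      (fst P + u * cos ph + v * sin ph - fst y) by ring.
    replace (snd P + u * sin ph - v * 1 * cos ph - snd y) with
      (snd P + u * sin ph - v * cos ph - snd y) by ring. exact Hd. }
  destruct (Hc p q u v Hu Hv Hd') as [[s [t [Hs [Ht Hl]]]] | [s [t [Hs [Ht Hl]]]]].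
  - apply (H1 (fst P + s * cos ph + (- t) * sin ph, snd P + s * sin ph - (- t) * cos ph)).
    + exists s, (- t). split; [exact Hs|]. split; [lra|reflexivity].
    + exists y. split; [exact HY|]. apply dist_lt1. simpl.
      eapply Rle_lt_trans; [|exact Hl]. rewrite <- Hf. right. ring.
  - apply (H2 (fst P + s * cos ps + t * sin ps, snd P + s * sin ps - t * cos ps)).
    + exists s, t. split; [exact Hs|]. split; [lra|reflexivity].
    + exists y. split; [exact HY|]. apply dist_lt1. simpl.
      eapply Rle_lt_trans; [|exact Hl]. rewrite <- Hf, Hcos, Hsin. right. ring.
Qed.

Lemma local_ccw P ph ps a b d a' b' d' sn cs (Y : pset) :
  coreP sn cs a b d a' b' d' ->
  cos ps = cos ph * (1 - 2 * sn^2) - sin ph * (2 * sn * cs) ->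
  sin ps = sin ph * (1 - 2 * sn^2) + cos ph * (2 * sn * cs) ->
  (forall x, rect_cw P ph a b d x -> ~ Defs.N Y x) ->
  (forall x, rect_ccw P ps a b d x -> ~ Defs.N Y x) ->
  forall x, rect_ccw P ph a' b' d' x -> ~ Defs.N Y x.
Proof.
  intros Hc Hcos Hsin H1 H2 x [u [v [Hu [Hv ->]]]] [y [HY Hd]].
  apply dist_lt1 in Hd. simpl in Hd.
  destruct (frame (cos ph) (sin ph) (-1) (fst P) (snd P) (fst y) (snd y)) as [p [q Hf]].
  { replace (cos ph ^ 2 + sin ph ^ 2) with (Rsqr (sin ph) + Rsqr (cos ph)) by (unfold Rsqr; ring); apply sin2_cos2. }
  { right; reflexivity. }
  assert (Hd' : (u - p)^2 + (- v - q)^2 < 1).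
  { rewrite <- Hf. replace (fst P + u * cos ph + - v * -1 * sin ph - fst y) with
      (fst P + u * cos ph + v * sin ph - fst y) by ring.
    replace (snd P + u * sin ph - - v * -1 * cos ph - snd y) with
      (snd P + u * sin ph - v * cos ph - snd y) by ring. exact Hd. }
  assert (Hv' : 0 < - v < d') by lra.
  destruct (Hc p q u (- v) Hu Hv' Hd') as [[s [t [Hs [Ht Hl]]]] | [s [t [Hs [Ht Hl]]]]].
  - apply (H1 (fst P + s * cos ph + t * sin ph, snd P + s * sin ph - t * cos ph)).
    + exists s, t. split; [exact Hs|]. split; [lra|reflexivity].
    + exists y. split; [exact HY|]. apply dist_lt1. simpl.
      eapply Rle_lt_trans; [|exact Hl]. rewrite <- Hf. right. ring.
  - apply (H2 (fst P + s * cos ps + (- t) * sin ps, snd P + s * sin ps - (- t) * cos ps)).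
    + exists s, (- t). split; [exact Hs|]. split; [lra|reflexivity].
    + exists y. split; [exact HY|]. apply dist_lt1. simpl.
      eapply Rle_lt_trans; [|exact Hl]. rewrite <- Hf, Hcos, Hsin. right. ring.
Qed.
Definition rectb (P : point) th a b d (c : bool) : pset :=
  if c then rect_cw P th a b d else rect_ccw P th a b d.

Lemma dissected_iff A P th a b d c :
  dissected A P th a b d c <->
  (forall x, rectb P th a b d c x -> A x) /\ (forall x, rectb P th a b d (negb c) x -> ~ A x).
Proof. destruct c; simpl; tauto. Qed.

Lemma rect_mono P th a b d a' b' d' c x : a <= a' -> b' <= b -> d' <= d ->
  rectb P th a' b' d' c x -> rectb P th a b d c x.
Proof.
  intros H1 H2 H3. destruct c; simpl; intros [s [t [Hs [Ht E]]]]; exists s, t; (split; [lra|split; [lra|exact E]]).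
Qed.

Lemma rect_ne P th a b d c : a < b -> 0 < d -> exists x, rectb P th a b d c x.
Proof.
  intros H1 H2. destruct c; simpl.
  - exists (fst P + (a+b)/2 * cos th + (d/2) * sin th, snd P + (a+b)/2 * sin th - (d/2) * cos th).
    exists ((a+b)/2), (d/2). split; [lra|split; [lra|reflexivity]].
  - exists (fst P + (a+b)/2 * cos th + (-d/2) * sin th, snd P + (a+b)/2 * sin th - (-d/2) * cos th).
    exists ((a+b)/2), (-d/2). split; [lra|split; [lra|reflexivity]].
Qed.

Lemma rot_minus ph ps th k : ps = ph - 2 * th + 2 * PI * k -> (k = 0 \/ k = 1) ->
  cos ps = cos ph * (1 - 2 * sin th ^ 2) + sin ph * (2 * sin th * cos th) /\
  sin ps = sin ph * (1 - 2 * sin th ^ 2) - cos ph * (2 * sin th * cos th).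
Proof.
  intros E Hk.
  assert (Hc : cos ps = cos (ph - 2 * th) /\ sin ps = sin (ph - 2 * th)).
  { destruct Hk as [-> | ->].
    - rewrite E. split; f_equal; ring.
    - rewrite E. rewrite Rmult_1_r, (cos_plus (ph - 2 * th) (2 * PI)), (sin_plus (ph - 2 * th) (2 * PI)), cos_2PI, sin_2PI. split; ring. }
  destruct Hc as [-> ->].
  rewrite (cos_minus ph (2 * th)), (sin_minus ph (2 * th)), cos_2a_sin, sin_2a. split; ring.
Qed.

Lemma rot_plus ph ps th k : ps = ph + 2 * th - 2 * PI * k -> (k = 0 \/ k = 1) ->
  cos ps = cos ph * (1 - 2 * sin th ^ 2) - sin ph * (2 * sin th * cos th) /\
  sin ps = sin ph * (1 - 2 * sin th ^ 2) + cos ph * (2 * sin th * cos th).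
Proof.
  intros E Hk.
  assert (Hc : cos ps = cos (ph + 2 * th) /\ sin ps = sin (ph + 2 * th)).
  { destruct Hk as [-> | ->].
    - rewrite E. split; f_equal; ring.
    - rewrite E. replace (ph + 2 * th - 2 * PI * 1) with ((ph + 2 * th) + - (2 * PI)) by ring.
      rewrite (cos_plus (ph + 2 * th) (- (2 * PI))), (sin_plus (ph + 2 * th) (- (2 * PI))), cos_neg, sin_neg, cos_2PI, sin_2PI. split; ring. }
  destruct Hc as [-> ->].
  rewrite (cos_plus ph (2 * th)), (sin_plus ph (2 * th)), cos_2a_sin, sin_2a. split; ring.
Qed.

Definition phi (th0 : R) (n i : nat) := th0 + 2 * PI * INR i / INR n.

Lemma geo n P th0 (o : nat -> bool) a b d a' b' d' (Y : pset) :
  (2 <= n)%nat -> coreP (sin (PI / INR n)) (cos (PI / INR n)) a b d a' b' d' ->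
  (forall i, (i < n)%nat -> o i <> o ((i + 1) mod n)%nat) ->
  (forall i, (i < n)%nat -> forall x, rectb P (phi th0 n i) a b d (negb (o i)) x -> ~ Defs.N Y x) ->
  forall i, (i < n)%nat -> forall x, rectb P (phi th0 n i) a' b' d' (o i) x -> ~ Defs.N Y x.
Proof.
  intros Hn Hc Halt H i Hi.
  assert (Hn0 : INR n <> 0) by (apply not_0_INR; lia).
  destruct (o i) eqn:Ho; simpl.
  -
    assert (Hj : exists j k, (j < n)%nat /\ o j = false /\
               phi th0 n j = phi th0 n i - 2 * (PI / INR n) + 2 * PI * k /\ (k = 0 \/ k = 1)).
    { destruct i as [|i'].
      - exists (n - 1)%nat, 1. split; [lia|]. split.
        + pose proof (Halt (n - 1)%nat ltac:(lia)) as Ha.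
          replace (n - 1 + 1)%nat with n in Ha by lia. rewrite Nat.Div0.mod_same in Ha by lia.
          rewrite Ho in Ha. destruct (o (n-1)%nat); congruence.
        + split; [|right; reflexivity]. unfold phi. rewrite minus_INR by lia. simpl INR. field. auto.
      - exists i', 0. split; [lia|]. split.
        + pose proof (Halt i' ltac:(lia)) as Ha.
          rewrite Nat.mod_small in Ha by lia. replace (i' + 1)%nat with (S i') in Ha by lia.
          rewrite Ho in Ha. destruct (o i'); congruence.
        + split; [|left; reflexivity]. unfold phi. rewrite S_INR. field. auto. }
    destruct Hj as [j [k [Hjn [Hoj [E Hk]]]]].
    destruct (rot_minus _ _ _ _ E Hk) as [Hcos Hsin].
    apply (local_cw P (phi th0 n i) (phi th0 n j) a b d a' b' d' _ _ Y Hc Hcos Hsin).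
    + intros x Hx. apply (H i Hi). rewrite Ho. exact Hx.
    + intros x Hx. apply (H j Hjn). rewrite Hoj. exact Hx.
  -
    assert (Hj : exists j k, (j < n)%nat /\ o j = true /\
               phi th0 n j = phi th0 n i + 2 * (PI / INR n) - 2 * PI * k /\ (k = 0 \/ k = 1)).
    { pose proof (Halt i Hi) as Ha. rewrite Ho in Ha.
      destruct (Nat.eq_dec (i + 1) n) as [Ei|Ei].
      - exists 0%nat, 1. split; [lia|]. split.
        + rewrite Ei, Nat.Div0.mod_same in Ha by lia. destruct (o 0%nat); congruence.
        + split; [|right; reflexivity]. unfold phi.
          assert (INR n = INR i + 1) by (rewrite <- Ei, plus_INR; reflexivity).
          simpl INR. rewrite H0. field. rewrite <- H0. auto.
      - exists (i + 1)%nat, 0. split; [lia|]. split.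
        + rewrite Nat.mod_small in Ha by lia. destruct (o (i + 1)%nat); congruence.
        + split; [|left; reflexivity]. unfold phi. rewrite plus_INR. simpl INR. field. auto. }
    destruct Hj as [j [k [Hjn [Hoj [E Hk]]]]].
    destruct (rot_plus _ _ _ _ E Hk) as [Hcos Hsin].
    apply (local_ccw P (phi th0 n i) (phi th0 n j) a b d a' b' d' _ _ Y Hc Hcos Hsin).
    + intros x Hx. apply (H i Hi). rewrite Ho. exact Hx.
    + intros x Hx. apply (H j Hjn). rewrite Hoj. exact Hx.
Qed.

Lemma main_ind n : (2 <= n)%nat ->
  forall m (X : pset), Defs.D m X -> forall a b d P th0 (o : nat -> bool),
  0 <= a -> a < b -> 0 < d -> a * sin (PI / INR n) < cos (PI / INR n) ->
  (forall i, (i < n)%nat -> dissected X P (phi th0 n i) a b d (o i)) ->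
  (forall i, (i < n)%nat -> o i <> o ((i + 1) mod n)%nat) -> False.
Proof.
  intros Hn.
  assert (HS : 0 < sin (PI / INR n)).
  { apply sin_gt_0.
    - apply Rdiv_lt_0_compat; [exact PI_RGT_0|]. apply lt_0_INR; lia.
    - assert (1 < INR n) by (apply lt_1_INR; lia).
      apply (Rmult_lt_reg_r (INR n)); [lra|]. unfold Rdiv. rewrite Rmult_assoc, Rinv_l by lra.
      pose proof PI_RGT_0. nra. }
  assert (HSC : sin (PI / INR n) ^ 2 + cos (PI / INR n) ^ 2 = 1).
  { replace (sin (PI / INR n) ^ 2 + cos (PI / INR n) ^ 2) with
      (Rsqr (sin (PI / INR n)) + Rsqr (cos (PI / INR n))) by (unfold Rsqr; ring). apply sin2_cos2. }
  induction m as [|m IH]; intros X HD a b d P th0 o Ha Hab Hd HaS Hdis Halt.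
  - exact HD.
  - destruct (core _ _ a b d HS HSC Ha Hab Hd HaS) as [a' [b' [d' [Ha' [Hab' [Hb' [HaS' [Hd' [Hdd Hc]]]]]]]]].
    assert (Hdis' : forall i, (i < n)%nat ->
      (forall x, rectb P (phi th0 n i) a b d (o i) x -> X x) /\
      (forall x, rectb P (phi th0 n i) a b d (negb (o i)) x -> ~ X x)).
    { intros i Hi. apply dissected_iff. apply Hdis. exact Hi. }
    destruct m as [|k].
    +
      destruct HD as [A1 HA1].
      assert (Hg := geo n P th0 o a b d a' b' d' A1 Hn Hc Halt).
      destruct (rect_ne P (phi th0 n 0) a' b' d' (o 0%nat)) as [x Hx]; try lra.
      apply (Hg (fun i Hi x Hx => (fun HN => proj2 (Hdis' i Hi) x Hx (proj2 (HA1 x) HN))) 0%nat ltac:(lia) x Hx).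
      apply HA1. apply (proj1 (Hdis' 0%nat ltac:(lia))).
      apply (rect_mono _ _ _ _ _ a' b' d'); try lra. exact Hx.
    + simpl in HD.
      match type of HD with context [if ?c then _ else _] => destruct c end.
      *
        destruct HD as [D0 [Am [HD0 HX]]].
        assert (Hg := geo n P th0 o a b d a' b' d' Am Hn Hc Halt).
        apply (IH D0 HD0 a' b' d' P th0 o); try lra.
        -- intros i Hi. apply dissected_iff. split.
           ++ intros x Hx.
              assert (HXx : X x).
              { apply (proj1 (Hdis' i Hi)). apply (rect_mono _ _ _ _ _ a' b' d'); try lra. exact Hx. }
              apply HX in HXx. destruct HXx as [HXx|HXx]; [exact HXx|].
              exfalso. apply (Hg (fun i Hi x Hx HN => proj2 (Hdis' i Hi) x Hx (proj2 (HX x) (or_intror HN))) i Hi x Hx HXx).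
           ++ intros x Hx HD0x.
              apply (proj2 (Hdis' i Hi) x). apply (rect_mono _ _ _ _ _ a' b' d'); try lra. exact Hx.
              apply HX. left. exact HD0x.
        -- exact Halt.
      *
        destruct HD as [D0 [Am [HD0 HX]]].
        assert (Halt' : forall i, (i < n)%nat -> negb (o i) <> negb (o ((i + 1) mod n)%nat)).
        { intros i Hi E. apply (Halt i Hi). destruct (o i), (o ((i + 1) mod n)%nat); simpl in E; congruence. }
        assert (Hg := geo n P th0 (fun i => negb (o i)) a b d a' b' d' Am Hn Hc Halt').
        assert (Hg' : forall i, (i < n)%nat -> forall x, rectb P (phi th0 n i) a' b' d' (negb (o i)) x -> ~ Defs.N Am x).
        { apply Hg. intros i Hi x Hx HN. rewrite Bool.negb_involutive in Hx.
          apply (proj1 (HX x) (proj1 (Hdis' i Hi) x Hx)). exact HN. }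
        apply (IH D0 HD0 a' b' d' P th0 o); try lra.
        -- intros i Hi. apply dissected_iff. split.
           ++ intros x Hx.
              assert (HXx : X x).
              { apply (proj1 (Hdis' i Hi)). apply (rect_mono _ _ _ _ _ a' b' d'); try lra. exact Hx. }
              apply HX in HXx. exact (proj1 HXx).
           ++ intros x Hx HD0x.
              apply (proj2 (Hdis' i Hi) x). apply (rect_mono _ _ _ _ _ a' b' d'); try lra. exact Hx.
              apply HX. split; [exact HD0x|]. exact (Hg' i Hi x Hx).
        -- exact Halt.
Qed.

Theorem theorem4p6 (n : nat) (a b d : R) (A : pset) :
  (0 < n)%nat -> Nat.Even n ->
  0 <= a -> a < b -> 0 < d ->
  totally_dissected A n a b d ->
  a < cos (PI / INR n) / sin (PI / INR n) ->
  ~ drawable A.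
Proof.
  intros Hn0 Hev Ha Hab Hd [P [th0 [o [Hdis Halt]]]] Hcot [m Hm].
  assert (Hn : (2 <= n)%nat) by (destruct Hev as [k Hk]; lia).
  assert (HS : 0 < sin (PI / INR n)).
  { apply sin_gt_0.
    - apply Rdiv_lt_0_compat; [exact PI_RGT_0|]. apply lt_0_INR; lia.
    - assert (1 < INR n) by (apply lt_1_INR; lia).
      apply (Rmult_lt_reg_r (INR n)); [lra|]. unfold Rdiv. rewrite Rmult_assoc, Rinv_l by lra.
      pose proof PI_RGT_0. nra. }
  assert (HaS : a * sin (PI / INR n) < cos (PI / INR n)).
  { apply (Rmult_lt_compat_r (sin (PI / INR n))) in Hcot; [|exact HS].
    unfold Rdiv in Hcot. rewrite Rmult_assoc, Rinv_l in Hcot by lra. lra. }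
  apply (main_ind n Hn m A Hm a b d P th0 o Ha Hab Hd HaS); [exact Hdis | exact Halt].
Qed.
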